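(* Let $G$ be a set, $\kappa$ a regular cardinal, $L$ a normal modal logic with the finite model property and $T\subseteq\mathrm{Fm}_\kappa(G)$. Then the Lindenbaum–Tarski algebra $\mathrm{LT}_L(G,\kappa,T)$ is a $\kappa$-complete $L$-algebra (every subset of cardinality $<\kappa$ has a meet and a join), with $\bigwedge\{[\psi]:\psi\in S\}=[\bigwedge S]$ and $\bigvee\{[\psi]:\psi\in S\}=[\bigvee S]$ for $|S|<\kappa$.
   Context: $\mathrm{Fm}_\kappa(G)$ is the least set containing $G$ closed under $\neg$, $\Box$, and $\bigwedge S,\bigvee S$ for sets $S$ of size $<\kappa$; $\varphi\leftrightarrow\psi$ abbreviates $(\neg\varphi\vee\psi)\wedge(\neg\psi\vee\varphi)$ with binary $\wedge,\vee$ meaning $\bigwedge,\bigvee$ of two-element sets. The calculus $(G,\kappa,L,T)$ has rules: (Ax) $\varphi\Rightarrow\varphi$; (W) from $\Gamma\Rightarrow\Delta$ infer $\Gamma,\Gamma'\Rightarrow\Delta,\Delta'$; (Cut) from $\Gamma\Rightarrow\Delta,\varphi$ for every $\varphi\in S$ and $S,\Gamma'\Rightarrow\Delta'$ infer $\Gamma,\Gamma'\Rightarrow\Delta,\Delta'$; (L$\neg$) from $\Gamma\Rightarrow\Delta,S$ infer $\neg S,\Gamma\Rightarrow\Delta$; (R$\neg$) from $S,\Gamma\Rightarrow\Delta$ infer $\Gamma\Rightarrow\Delta,\neg S$; for a family $\mathscr S$ of sets each of size $<\kappa$: (L$\bigwedge$) from $\bigcup\mathscr S,\Gamma\Rightarrow\Delta$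 infer $\{\bigwedge S\},\Gamma\Rightarrow\Delta$; (R$\bigwedge$) from $\Gamma\Rightarrow\Delta,\{c(S):S\in\mathscr S\}$ for every choice function $c$ infer $\Gamma\Rightarrow\Delta,\{\bigwedge S:S\in\mathscr S\}$; (L$\bigvee$) from $\{c(S)\},\Gamma\Rightarrow\Delta$ for every choice function $c$ infer $\{\bigvee S:S\in\mathscr S\},\Gamma\Rightarrow\Delta$; (R$\bigvee$) from $\Gamma\Rightarrow\Delta,\bigcup\mathscr S$ infer $\Gamma\Rightarrow\Delta,\{\bigvee S\}$; (Nec) from $S\Rightarrow\varphi$ infer $\Box S\Rightarrow\Box\varphi$; (lf) for sets $S_n$ of size $<\kappa$: from $\{\Box^n\bigvee(I\cap S_n):n\in\omega\},\Gamma\Rightarrow\Delta$ for every finite $I\subseteq\bigcup_nS_n$ infer $\{\Box^n\bigvee S_n:n\in\omega\},\Gamma\Rightarrow\Delta$; (T,L) from $S,\Gamma\Rightarrow\Delta$ infer $\Gamma\Rightarrow\Delta$ for $S\subseteq T\cup L_{(G,\kappa)}$ ($L_{(G,\kappa)}$ = substitution instances in $\mathrm{Fm}_\kappa(G)$ of theorems of $L$). Proofs are well-founded trees. $\mathrm{LT}_L(G,\kappa,T)$ is the quotient of $\mathrm{Fm}_\kappa(G)$ by $\varphi\sim\psi\iff(G,\kappa,L,T)\vdash\ \Rightarrow\varphi\leftrightarrow\psi$, with operations defined on representatives; $[\varphi]\le[\psi]$ iff $\varphi\Rightarrow\psi$ is provable. An $L$-algebra is a modal algebra in the variety corresponding to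 $L$. *)

(* Defs.v *)
From Stdlib Require Import List ClassicalEpsilon.
Set Implicit Arguments.

(** Universe of index sets for infinitary conjunctions/disjunctions;
    the cardinal kappa is represented by a type K : IdxT. *)
Definition IdxT := Type.

Definition lt_card (A B : Type) : Prop :=
  (exists f : A -> B, forall x y, f x = f y -> x = y) /\
  ~ (exists g : B -> A, forall x y, g x = g y -> x = y).

Definition regular (K : IdxT) : Prop :=
  (exists e : nat -> K, forall m n, e m = e n -> m = n) /\
  (forall (I : IdxT) (A : I -> IdxT), lt_card I K ->
     (forall i, lt_card (A i) K) -> lt_card {i : I & A i} K).

Inductive fm (G : Type) : Type :=
| Var : G -> fm G
| Neg : fm G -> fm G
| Box : fm G -> fm G
| BigAnd : forall I : IdxT, (I -> fm G) -> fm G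
| BigOr : forall I : IdxT, (I -> fm G) -> fm G.
Arguments Var {G}. Arguments Neg {G}. Arguments Box {G}.
Arguments BigAnd {G}. Arguments BigOr {G}.

Inductive Fmk (G : Type) (K : IdxT) : fm G -> Prop :=
| FVar : forall g, Fmk K (Var g)
| FNeg : forall p, Fmk K p -> Fmk K (Neg p)
| FBox : forall p, Fmk K p -> Fmk K (Box p)
| FAnd : forall (I : IdxT) (f : I -> fm G), lt_card I K ->
           (forall i, Fmk K (f i)) -> Fmk K (BigAnd I f)
| FOr : forall (I : IdxT) (f : I -> fm G), lt_card I K ->
           (forall i, Fmk K (f i)) -> Fmk K (BigOr I f).

Definition And2 {G} (a b : fm G) : fm G := BigAnd bool (fun t => if t then a else b).
Definition Or2 {G} (a b : fm G) : fm G := BigOr bool (fun t => if t then a else b).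
Definition Iff {G} (p q : fm G) : fm G := And2 (Or2 (Neg p) q) (Or2 (Neg q) p).
Definition Boxn {G} (n : nat) (p : fm G) : fm G := Nat.iter n Box p.

Definition fset (G : Type) := fm G -> Prop.
Definition emp {G} : fset G := fun _ => False.
Definition sing {G} (p : fm G) : fset G := fun x => x = p.
Definition U {G} (A B : fset G) : fset G := fun x => A x \/ B x.
Definition negs {G} (S : fset G) : fset G := fun x => exists p, S p /\ x = Neg p.
Definition boxes {G} (S : fset G) : fset G := fun x => exists p, S p /\ x = Box p.
Definition subF {G} (K : IdxT) (S : fset G) : Prop := forall x, S x -> Fmk K x.

Inductive mf : Type :=
| MV : nat -> mf
| MN : mf -> mf
| MA : mf -> mf -> mf
| MO : mf -> mf -> mf
| MB : mf -> mf.
Definition MImp (a b : mf) : mf := MO (MN a) b.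

Fixpoint msubst (s : nat -> mf) (p : mf) : mf :=
  match p with
  | MV n => s n | MN a => MN (msubst s a)
  | MA a b => MA (msubst s a) (msubst s b)
  | MO a b => MO (msubst s a) (msubst s b)
  | MB a => MB (msubst s a) end.

Fixpoint beval (v : nat -> bool) (bx : mf -> bool) (p : mf) : bool :=
  match p with
  | MV n => v n | MN a => negb (beval v bx a)
  | MA a b => andb (beval v bx a) (beval v bx b)
  | MO a b => orb (beval v bx a) (beval v bx b)
  | MB a => bx a end.
Definition taut (p : mf) : Prop := forall v bx, beval v bx p = true.

Record normal_logic (L : mf -> Prop) : Prop := {
  nl_taut : forall p, taut p -> L p;
  nl_K : forall p q, L (MImp (MB (MImp p q)) (MImp (MB p) (MB q)));
  nl_MP : forall p q, L p -> L (MImp p q) -> L q;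
  nl_nec : forall p, L p -> L (MB p);
  nl_subst : forall p s, L p -> L (msubst s p) }.

Fixpoint kval {W : Type} (R : W -> W -> Prop) (V : nat -> W -> Prop) (w : W) (p : mf) : Prop :=
  match p with
  | MV n => V n w | MN a => ~ kval R V w a
  | MA a b => kval R V w a /\ kval R V w b
  | MO a b => kval R V w a \/ kval R V w b
  | MB a => forall u, R w u -> kval R V u a end.

Definition fmp (L : mf -> Prop) : Prop :=
  forall p, ~ L p ->
  exists (W : Type) (enum : list W) (R : W -> W -> Prop),
    (forall w, In w enum) /\
    (forall q, L q -> forall V w, kval R V w q) /\
    (exists V w, ~ kval R V w p).

(** translation (substitution instance) of a finitary formula into fm G *)
Fixpoint tr {G} (s : nat -> fm G) (p : mf) : fm G :=
  match p with
  | MV n => s n | MN a => Neg (tr s a)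
  | MA a b => And2 (tr s a) (tr s b)
  | MO a b => Or2 (tr s a) (tr s b)
  | MB a => Box (tr s a) end.

Definition Linst (G : Type) (K : IdxT) (L : mf -> Prop) : fset G :=
  fun x => Fmk K x /\ exists p s, L p /\ x = tr s p.

(** The calculus (G,kappa,L,T); [prov Gam Del] means Gam => Del is provable
    (proofs are well-founded trees = inductive derivations). *)
Inductive prov (G : Type) (K : IdxT) (L : mf -> Prop) (T : fset G) : fset G -> fset G -> Prop :=
| R_Ax : forall p, Fmk K p -> prov K L T (sing p) (sing p)
| R_W : forall Gam Del Gam' Del', prov K L T Gam Del -> subF K Gam' -> subF K Del' ->
    prov K L T (U Gam Gam') (U Del Del')
| R_Cut : forall (S Gam Del Gam' Del' : fset G),
    subF K Gam -> subF K Del ->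
    (forall p, S p -> prov K L T Gam (U Del (sing p))) ->
    prov K L T (U S Gam') Del' -> prov K L T (U Gam Gam') (U Del Del')
| R_LNeg : forall S Gam Del, prov K L T Gam (U Del S) -> prov K L T (U (negs S) Gam) Del
| R_RNeg : forall S Gam Del, prov K L T (U S Gam) Del -> prov K L T Gam (U Del (negs S))
| R_LAnd : forall (J : Type) (Ix : J -> IdxT) (F : forall j, Ix j -> fm G) Gam Del,
    (forall j, lt_card (Ix j) K) -> (forall j i, Fmk K (F j i)) ->
    prov K L T (U (fun x => exists j i, x = F j i) Gam) Del ->
    prov K L T (U (fun x => exists j, x = BigAnd (Ix j) (F j)) Gam) Del
| R_RAnd : forall (J : Type) (Ix : J -> IdxT) (F : forall j, Ix j -> fm G) Gam Del,
    (forall j, lt_card (Ix j) K) -> (forall j i, Fmk K (F j i)) ->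
    subF K Gam -> subF K Del ->
    (forall c : forall j, Ix j, prov K L T Gam (U Del (fun x => exists j, x = F j (c j)))) ->
    prov K L T Gam (U Del (fun x => exists j, x = BigAnd (Ix j) (F j)))
| R_LOr : forall (J : Type) (Ix : J -> IdxT) (F : forall j, Ix j -> fm G) Gam Del,
    (forall j, lt_card (Ix j) K) -> (forall j i, Fmk K (F j i)) ->
    subF K Gam -> subF K Del ->
    (forall c : forall j, Ix j, prov K L T (U (fun x => exists j, x = F j (c j)) Gam) Del) ->
    prov K L T (U (fun x => exists j, x = BigOr (Ix j) (F j)) Gam) Del
| R_ROr : forall (J : Type) (Ix : J -> IdxT) (F : forall j, Ix j -> fm G) Gam Del,
    (forall j, lt_card (Ix j) K) -> (forall j i, Fmk K (F j i)) ->
    prov K L T Gam (U Del (fun x => exists j i, x = F j i)) ->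
    prov K L T Gam (U Del (fun x => exists j, x = BigOr (Ix j) (F j)))
| R_Nec : forall S p, prov K L T S (sing p) -> prov K L T (boxes S) (sing (Box p))
| R_lf : forall (Ix : nat -> IdxT) (F : forall n, Ix n -> fm G) Gam Del,
    (forall n, lt_card (Ix n) K) -> (forall n i, Fmk K (F n i)) ->
    subF K Gam -> subF K Del ->
    (forall l : list (fm G), (forall x, In x l -> exists n i, x = F n i) ->
       prov K L T
         (U (fun x => exists n, x = Boxn n (BigOr {i : Ix n | In (F n i) l}
                                               (fun i => F n (proj1_sig i)))) Gam) Del) ->
    prov K L T (U (fun x => exists n, x = Boxn n (BigOr (Ix n) (F n))) Gam) Del
| R_TL : forall S Gam Del, (forall x, S x -> T x \/ Linst K L x) ->
    prov K L T (U S Gam) Del -> prov K L T Gam Del.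

Record MAops (A : Type) := {
  mtop : A; mbot : A; mmeet : A -> A -> A; mjoin : A -> A -> A;
  mneg : A -> A; mbox : A -> A }.

Record boolean_algebra {A} (o : MAops A) : Prop := {
  ba_meetC : forall a b, mmeet o a b = mmeet o b a;
  ba_joinC : forall a b, mjoin o a b = mjoin o b a;
  ba_meetA : forall a b c, mmeet o a (mmeet o b c) = mmeet o (mmeet o a b) c;
  ba_joinA : forall a b c, mjoin o a (mjoin o b c) = mjoin o (mjoin o a b) c;
  ba_absm : forall a b, mmeet o a (mjoin o a b) = a;
  ba_absj : forall a b, mjoin o a (mmeet o a b) = a;
  ba_distm : forall a b c, mmeet o a (mjoin o b c) = mjoin o (mmeet o a b) (mmeet o a c);
  ba_distj : forall a b c, mjoin o a (mmeet o b c) = mmeet o (mjoin o a b) (mjoin o a c);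
  ba_top : forall a, mmeet o a (mtop o) = a;
  ba_bot : forall a, mjoin o a (mbot o) = a;
  ba_compm : forall a, mmeet o a (mneg o a) = mbot o;
  ba_compj : forall a, mjoin o a (mneg o a) = mtop o }.

Definition modal_algebra {A} (o : MAops A) : Prop :=
  boolean_algebra o /\ mbox o (mtop o) = mtop o /\
  (forall a b, mbox o (mmeet o a b) = mmeet o (mbox o a) (mbox o b)).

Fixpoint aeval {A} (o : MAops A) (v : nat -> A) (p : mf) : A :=
  match p with
  | MV n => v n | MN a => mneg o (aeval o v a)
  | MA a b => mmeet o (aeval o v a) (aeval o v b)
  | MO a b => mjoin o (aeval o v a) (aeval o v b)
  | MB a => mbox o (aeval o v a) end.

Definition L_algebra (L : mf -> Prop) {A} (o : MAops A) : Prop :=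
  modal_algebra o /\ (forall p, L p -> forall v, aeval o v p = mtop o).

Definition mle {A} (o : MAops A) (a b : A) : Prop := mmeet o a b = a.
Definition is_glb {A} (o : MAops A) (X : A -> Prop) (m : A) : Prop :=
  (forall x, X x -> mle o m x) /\ (forall y, (forall x, X x -> mle o y x) -> mle o y m).
Definition is_lub {A} (o : MAops A) (X : A -> Prop) (m : A) : Prop :=
  (forall x, X x -> mle o x m) /\ (forall y, (forall x, X x -> mle o x y) -> mle o m y).

Definition kappa_complete (K : IdxT) {A} (o : MAops A) : Prop :=
  forall X : A -> Prop, lt_card {x : A | X x} K ->
    (exists m, is_glb o X m) /\ (exists j, is_lub o X j).

Lemma regular_bool (K : IdxT) : regular K -> lt_card bool K.
Proof.
  intros [[e he] _]. split.
  - exists (fun t : bool => if t then e 0 else e 1).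
    intros [|] [|] H; auto; apply he in H; discriminate.
  - intros [g hg].
    destruct (g (e 0)) eqn:E0, (g (e 1)) eqn:E1, (g (e 2)) eqn:E2;
      try (assert (H: 0 = 1) by (apply he, hg; congruence); discriminate);
      try (assert (H: 0 = 2) by (apply he, hg; congruence); discriminate);
      try (assert (H: 1 = 2) by (apply he, hg; congruence); discriminate).
Qed.

Lemma regular_empty (K : IdxT) : regular K -> lt_card Empty_set K.
Proof.
  intros [[e he] _]. split.
  - exists (fun x : Empty_set => match x with end). intros [].
  - intros [g _]. destruct (g (e 0)).
Qed.

Section LT.
Variables (G : Type) (K : IdxT) (L : mf -> Prop) (T : fset G).

Definition equivF (p q : fm G) : Prop := prov K L T emp (sing (Iff p q)).
Definition cls (p : fm G) : fset G := fun q => Fmk K q /\ equivF p q.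

Definition LTcar : Type := {c : fset G | exists p, Fmk K p /\ c = cls p}.

Definition rep (x : LTcar) : fm G :=
  proj1_sig (constructive_indefinite_description _ (proj2_sig x)).
Lemma rep_ok (x : LTcar) : Fmk K (rep x).
Proof. unfold rep. exact (proj1 (proj2_sig (constructive_indefinite_description _ (proj2_sig x)))). Qed.

Definition mkLT (p : fm G) (H : Fmk K p) : LTcar :=
  exist _ (cls p) (ex_intro _ p (conj H eq_refl)).

Variable HK : regular K.

Lemma Fmk_And2 (p q : fm G) : Fmk K p -> Fmk K q -> Fmk K (And2 p q).
Proof. intros; apply FAnd; [apply regular_bool, HK | intros [|]; auto]. Qed.
Lemma Fmk_Or2 (p q : fm G) : Fmk K p -> Fmk K q -> Fmk K (Or2 p q).
Proof. intros; apply FOr; [apply regular_bool, HK | intros [|]; auto]. Qed.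

Definition TopF : fm G := BigAnd Empty_set (fun e => match e with end).
Definition BotF : fm G := BigOr Empty_set (fun e => match e with end).
Lemma Fmk_Top : Fmk K TopF.
Proof. apply FAnd; [apply regular_empty, HK | intros []]. Qed.
Lemma Fmk_Bot : Fmk K BotF.
Proof. apply FOr; [apply regular_empty, HK | intros []]. Qed.

Definition LT_ops : MAops LTcar := {|
  mtop := mkLT Fmk_Top;
  mbot := mkLT Fmk_Bot;
  mmeet := fun a b => mkLT (Fmk_And2 (rep_ok a) (rep_ok b));
  mjoin := fun a b => mkLT (Fmk_Or2 (rep_ok a) (rep_ok b));
  mneg := fun a => mkLT (FNeg (rep_ok a));
  mbox := fun a => mkLT (FBox (rep_ok a)) |}.
End LT.

(* Main.v *)
Require Import Defs.
From Stdlib Require Import List ClassicalEpsilon FunctionalExtensionality PropExtensionality ProofIrrelevance.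
Import ListNotations.

Section Calc.
Variables (G : Type) (K : IdxT) (L : mf -> Prop) (T : fset G).
Variable HK : regular K.

Lemma fext (A B : fset G) : (forall x, A x <-> B x) -> A = B.
Proof. intro H; apply functional_extensionality; intro x; apply propositional_extensionality; auto. Qed.

Definition lset (l : list (fm G)) : fset G := fun x => In x l.

Lemma Fmk_inv (p : fm G) : Fmk K p -> match p return Prop with
  | Var _ => True | Neg q => Fmk K q | Box q => Fmk K q
  | BigAnd J0 f => lt_card J0 K /\ forall i, Fmk K (f i)
  | BigOr J0 f => lt_card J0 K /\ forall i, Fmk K (f i) end.
Proof. destruct 1; auto. Qed.

Lemma Fmk_Boxn n (p : fm G) : Fmk K p -> Fmk K (Boxn n p).
Proof. induction n; simpl; intros; auto. apply FBox; auto. Qed.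

Lemma prov_wf (A B : fset G) : prov K L T A B -> subF K A /\ subF K B.
Proof.
  induction 1; unfold subF, U, sing, negs, boxes in *.
  - split; intros x ->; auto.
  - firstorder.
  - destruct IHprov as [Y1 Y2]. split; intros x [Hx|Hx]; auto.
  - destruct IHprov as [Y1 Y2]. split; [intros x [[q [Hq ->]]|Hx]| ]; auto.
    apply FNeg; auto.
  - destruct IHprov as [Y1 Y2]. split; [intros x Hx|intros x [Hx|[q [Hq ->]]]]; auto.
    apply FNeg; auto.
  - destruct IHprov as [Y1 Y2]. split; [intros x [[j ->]|Hx]|]; auto.
    apply FAnd; auto.
  - split; [auto| intros x [Hx|[j ->]]]; auto. apply FAnd; auto.
  - split; [intros x [[j ->]|Hx]|]; auto. apply FOr; auto.
  - destruct IHprov as [Y1 Y2]. split; [|intros x [Hx|[j ->]]]; auto. apply FOr; auto.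
  - destruct IHprov as [Y1 Y2]. split; [intros x [q [Hq ->]]|intros x ->]; apply FBox; auto.
  - split; [intros x [[n ->]|Hx]|]; auto. apply Fmk_Boxn. apply FOr; auto.
  - destruct IHprov as [Y1 Y2]. split; auto.
Qed.

Lemma weakS (A B A' B' : fset G) : prov K L T A B -> subF K A' -> subF K B' ->
  (forall x, A x -> A' x) -> (forall x, B x -> B' x) -> prov K L T A' B'.
Proof.
  intros H HA HB IA IB.
  assert (E1 : U A A' = A') by (apply fext; unfold U; firstorder).
  assert (E2 : U B B' = B') by (apply fext; unfold U; firstorder).
  rewrite <- E1, <- E2. apply R_W; auto.
Qed.

Lemma prov_eq (A B A' B' : fset G) : prov K L T A B -> A = A' -> B = B' -> prov K L T A' B'.
Proof. intros H -> ->; auto. Qed.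

Lemma lset_perm (l l' : list (fm G)) : (forall x, In x l <-> In x l') -> lset l = lset l'.
Proof. intro H; apply fext; exact H. Qed.

Lemma subF_lset (l : list (fm G)) : Forall (Fmk K) l -> subF K (lset l).
Proof. intros H x Hx. rewrite Forall_forall in H; auto. Qed.
Lemma lset_subF (l : list (fm G)) : subF K (lset l) -> Forall (Fmk K) l.
Proof. intros H. rewrite Forall_forall; auto. Qed.

Lemma weak_rule (m1 m2 l1 l2 : list (fm G)) : prov K L T (lset m1) (lset m2) -> incl m1 l1 -> incl m2 l2 ->
  Forall (Fmk K) l1 -> Forall (Fmk K) l2 -> prov K L T (lset l1) (lset l2).
Proof. intros; eapply weakS; eauto using subF_lset. Qed.

Lemma ax_rule (p : fm G) (l1 l2 : list (fm G)) : Forall (Fmk K) l1 -> Forall (Fmk K) l2 -> In p l1 -> In p l2 ->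
  prov K L T (lset l1) (lset l2).
Proof.
  intros F1 F2 I1 I2. apply (weakS (sing p) (sing p)).
  apply R_Ax. rewrite Forall_forall in F1; auto.
  apply subF_lset; auto. apply subF_lset; auto.
  all: intros x Hx; unfold sing in Hx; subst; auto.
Qed.

Lemma cut_rule (p : fm G) (l1 l2 : list (fm G)) : prov K L T (lset l1) (lset (p :: l2)) -> prov K L T (lset (p :: l1)) (lset l2) ->
  prov K L T (lset l1) (lset l2).
Proof.
  intros H1 H2. destruct (prov_wf _ _ H1) as [F1 F2]. destruct (prov_wf _ _ H2) as [F3 F4].
  assert (E : forall l, U (lset l) (lset l) = lset l) by (intro; apply fext; unfold U; tauto).
  rewrite <- (E l1), <- (E l2). apply (R_Cut (S:=sing p)).
  - auto.
  - intros x Hx; apply F2; right; auto.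
  - intros q Hq; unfold sing in Hq; subst. eapply prov_eq; [exact H1| auto |].
    apply fext; unfold U, lset, sing; simpl; firstorder.
  - eapply prov_eq; [exact H2| |auto]. apply fext; unfold U, lset, sing; simpl; firstorder.
Qed.

Ltac sext := apply fext; intro; unfold U, lset, sing, negs, boxes; simpl; firstorder (subst; eauto; try (exists tt; eauto)); try exact tt.

Lemma LNeg_rule (p : fm G) (l1 l2 : list (fm G)) : prov K L T (lset l1) (lset (p :: l2)) -> prov K L T (lset (Neg p :: l1)) (lset l2).
Proof.
  intro H. assert (E1: lset (p::l2) = U (lset l2) (sing p)) by sext.
  assert (E2: lset (Neg p :: l1) = U (negs (sing p)) (lset l1)) by sext.
  rewrite E2; apply R_LNeg; rewrite <- E1; exact H.
Qed.

Lemma RNeg_rule (p : fm G) (l1 l2 : list (fm G)) : prov K L T (lset (p :: l1)) (lset l2) -> prov K L T (lset l1) (lset (Neg p :: l2)).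
Proof.
  intro H. assert (E1: lset (p::l1) = U (sing p) (lset l1)) by sext.
  assert (E2: lset (Neg p :: l2) = U (lset l2) (negs (sing p))) by sext.
  rewrite E2; apply R_RNeg; rewrite <- E1; exact H.
Qed.

Lemma LAndS_rule (I : IdxT) (f : I -> fm G) (l1 l2 : list (fm G)) : Fmk K (BigAnd I f) ->
  prov K L T (U (fun x => exists i, x = f i) (lset l1)) (lset l2) -> prov K L T (lset (BigAnd I f :: l1)) (lset l2).
Proof.
  intros HF H. apply Fmk_inv in HF. destruct HF as [Hc Hf].
  assert (E1: U (fun x => exists i, x = f i) (lset l1) = U (fun x => exists (j:unit) i, x = f i) (lset l1)) by sext.
  assert (E2: lset (BigAnd I f :: l1) = U (fun x => exists j:unit, x = BigAnd ((fun _ => I) j) ((fun _ => f) j)) (lset l1)).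
  { sext. }
  rewrite E2. apply R_LAnd; auto. rewrite <- E1; exact H.
Qed.

Lemma LAndI_rule (I : IdxT) (f : I -> fm G) i (l1 l2 : list (fm G)) : Fmk K (BigAnd I f) ->
  prov K L T (lset (f i :: l1)) (lset l2) -> prov K L T (lset (BigAnd I f :: l1)) (lset l2).
Proof.
  intros HF H. pose proof HF as HF'. apply Fmk_inv in HF'. destruct HF' as [Hc Hf].
  destruct (prov_wf _ _ H) as [F1 F2].
  apply LAndS_rule; auto. eapply weakS. exact H. 2: exact F2.
  intros x [[j E]|Hx]; [subst x; auto| apply F1; right; auto].
  intros x [E|Hx]. left; exists i; auto. right; auto. auto.
Qed.

Lemma RAndI_rule (I : IdxT) (f : I -> fm G) (l1 l2 : list (fm G)) : Fmk K (BigAnd I f) ->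
  (forall i, prov K L T (lset l1) (lset (f i :: l2))) -> 
  Forall (Fmk K) l1 -> Forall (Fmk K) l2 ->
  prov K L T (lset l1) (lset (BigAnd I f :: l2)).
Proof.
  intros HF H F1 F2. apply Fmk_inv in HF. destruct HF as [Hc Hf].
  assert (E2: lset (BigAnd I f :: l2) = U (lset l2) (fun x => exists j:unit, x = BigAnd ((fun _ => I) j) ((fun _ => f) j))).
  { sext. }
  rewrite E2. apply R_RAnd; auto using subF_lset.
  intros c. assert (E1: lset (f (c tt) :: l2) = U (lset l2) (fun x => exists j:unit, x = f (c j))).
  { apply fext; intro y; unfold U, lset; simpl; split; [intros [E|Hy]; [right; exists tt; auto|auto] | intros [Hy|[[] E]]; auto]. }
  rewrite <- E1; auto.
Qed.

Lemma LOrI_rule (I : IdxT) (f : I -> fm G) (l1 l2 : list (fm G)) : Fmk K (BigOr I f) ->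
  (forall i, prov K L T (lset (f i :: l1)) (lset l2)) -> 
  Forall (Fmk K) l1 -> Forall (Fmk K) l2 ->
  prov K L T (lset (BigOr I f :: l1)) (lset l2).
Proof.
  intros HF H F1 F2. apply Fmk_inv in HF. destruct HF as [Hc Hf].
  assert (E2: lset (BigOr I f :: l1) = U (fun x => exists j:unit, x = BigOr ((fun _ => I) j) ((fun _ => f) j)) (lset l1)).
  { sext. }
  rewrite E2. apply R_LOr; auto using subF_lset.
  intros c. assert (E1: lset (f (c tt) :: l1) = U (fun x => exists j:unit, x = f (c j)) (lset l1)).
  { apply fext; intro y; unfold U, lset; simpl; split; [intros [E|Hy]; [left; exists tt; auto|auto] | intros [[[] E]|Hy]; auto]. }
  rewrite <- E1; auto.
Qed.

Lemma ROrS_rule (I : IdxT) (f : I -> fm G) (l1 l2 : list (fm G)) : Fmk K (BigOr I f) ->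
  prov K L T (lset l1) (U (lset l2) (fun x => exists i, x = f i)) -> prov K L T (lset l1) (lset (BigOr I f :: l2)).
Proof.
  intros HF H. apply Fmk_inv in HF. destruct HF as [Hc Hf].
  assert (E1: U (lset l2) (fun x => exists i, x = f i) = U (lset l2) (fun x => exists (j:unit) i, x = f i)) by sext.
  assert (E2: lset (BigOr I f :: l2) = U (lset l2) (fun x => exists j:unit, x = BigOr ((fun _ => I) j) ((fun _ => f) j))).
  { sext. }
  rewrite E2. apply R_ROr; auto. rewrite <- E1; exact H.
Qed.

Lemma ROrI_rule (I : IdxT) (f : I -> fm G) i (l1 l2 : list (fm G)) : Fmk K (BigOr I f) ->
  prov K L T (lset l1) (lset (f i :: l2)) -> prov K L T (lset l1) (lset (BigOr I f :: l2)).
Proof.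
  intros HF H. pose proof HF as HF'. apply Fmk_inv in HF'. destruct HF' as [Hc Hf].
  destruct (prov_wf _ _ H) as [F1 F2].
  apply ROrS_rule; auto. eapply weakS. exact H. auto.
  intros x [Hx|[j E]]; [apply F2; right; auto|subst x; auto].
  auto. intros x [E|Hx]. right; exists i; auto. left; auto.
Qed.

Lemma Fmk_list_cons (p : fm G) l : Fmk K p -> Forall (Fmk K) l -> Forall (Fmk K) (p :: l).
Proof. auto. Qed.

Definition b2 (a b : fm G) : bool -> fm G := fun t => if t then a else b.

Lemma LAnd2_rule (a b : fm G) (l1 l2 : list (fm G)) : prov K L T (lset (a :: b :: l1)) (lset l2) -> prov K L T (lset (And2 a b :: l1)) (lset l2).
Proof.
  intros H. destruct (prov_wf _ _ H) as [F1 F2].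
  apply LAndS_rule. apply Fmk_And2; auto; apply F1; simpl; auto.
  eapply prov_eq; [exact H| |auto]. apply fext; unfold U, lset; simpl; intro x; split.
  intros [->|[->|Hx]]; auto. left; exists true; auto. left; exists false; auto.
  intros [[[|] ->]|Hx]; auto.
Qed.

Lemma ROr2_rule (a b : fm G) (l1 l2 : list (fm G)) : prov K L T (lset l1) (lset (a :: b :: l2)) -> prov K L T (lset l1) (lset (Or2 a b :: l2)).
Proof.
  intros H. destruct (prov_wf _ _ H) as [F1 F2].
  apply ROrS_rule. apply Fmk_Or2; auto; apply F2; simpl; auto.
  eapply prov_eq; [exact H|auto|]. apply fext; unfold U, lset; simpl; intro x; split.
  intros [->|[->|Hx]]; auto. right; exists true; auto. right; exists false; auto.
  intros [Hx|[[|] ->]]; auto.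
Qed.

Lemma RAnd2_rule (a b : fm G) (l1 l2 : list (fm G)) : prov K L T (lset l1) (lset (a :: l2)) -> prov K L T (lset l1) (lset (b :: l2)) ->
  prov K L T (lset l1) (lset (And2 a b :: l2)).
Proof.
  intros H1 H2. destruct (prov_wf _ _ H1) as [F1 F2]. destruct (prov_wf _ _ H2) as [F3 F4].
  apply RAndI_rule. apply Fmk_And2; auto. apply F2; simpl; auto. apply F4; simpl; auto.
  intros [|]; auto. apply lset_subF; auto.
  apply lset_subF; intros x Hx; apply F2; simpl; auto.
Qed.

Lemma LOr2_rule (a b : fm G) (l1 l2 : list (fm G)) : prov K L T (lset (a :: l1)) (lset l2) -> prov K L T (lset (b :: l1)) (lset l2) ->
  prov K L T (lset (Or2 a b :: l1)) (lset l2).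
Proof.
  intros H1 H2. destruct (prov_wf _ _ H1) as [F1 F2]. destruct (prov_wf _ _ H2) as [F3 F4].
  apply LOrI_rule. apply Fmk_Or2; auto. apply F1; simpl; auto. apply F3; simpl; auto.
  intros [|]; auto. 
  apply lset_subF; intros x Hx; apply F1; simpl; auto. apply lset_subF; auto.
Qed.

Lemma Top_rule (l1 l2 : list (fm G)) : Forall (Fmk K) l1 -> Forall (Fmk K) l2 -> In (TopF G) l2 -> prov K L T (lset l1) (lset l2).
Proof.
  intros F1 F2 I2. eapply weakS with (A := lset l1) (B := lset (TopF G :: l2)).
  apply RAndI_rule; auto. apply Fmk_Top; auto. intros [].
  apply subF_lset; auto. apply subF_lset; auto. auto.
  intros x [E|Hx]; [subst x|]; auto.
Qed.

Lemma Bot_rule (l1 l2 : list (fm G)) : Forall (Fmk K) l1 -> Forall (Fmk K) l2 -> In (BotF G) l1 -> prov K L T (lset l1) (lset l2).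
Proof.
  intros F1 F2 I2. eapply weakS with (A := lset (BotF G :: l1)) (B := lset l2).
  apply LOrI_rule; auto. apply Fmk_Bot; auto. intros [].
  apply subF_lset; auto. apply subF_lset; auto.
  intros x [E|Hx]; [subst x|]; auto. auto.
Qed.

Lemma Nec_rule (l : list (fm G)) (p : fm G) : prov K L T (lset l) (lset [p]) -> prov K L T (lset (map Box l)) (lset [Box p]).
Proof.
  intro H. assert (E1 : lset [p] = sing p) by sext.
  assert (E2 : lset [Box p] = sing (Box p)) by sext.
  assert (E3 : lset (map Box l) = boxes (lset l)).
  { apply fext; unfold lset, boxes; intro x; rewrite in_map_iff; firstorder. }
  rewrite E2, E3. apply R_Nec. rewrite <- E1; exact H.
Qed.


Ltac fmk1 := solve [repeat first [ assumption | apply (Fmk_And2 HK) | apply (Fmk_Or2 HK) | apply FNeg | apply FBox | apply (Fmk_Top G HK) | apply (Fmk_Bot G HK) ]].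
Ltac fmk_all := repeat (apply Forall_cons; [fmk1|]); apply Forall_nil.
Ltac inl := solve [repeat first [apply in_eq | apply in_cons]].
Ltac incl_tac := solve [let y := fresh "y" in let Hy := fresh "Hy" in intros y Hy; simpl in Hy |- *; tauto].

Ltac leaf := match goal with |- prov _ _ _ (lset ?l1) (lset ?l2) =>
   match l1 with context [cons ?p _] => apply (ax_rule p); [fmk_all|fmk_all|inl|inl] end end.
Ltac hleaf := match goal with H : prov _ _ _ (lset ?m1) (lset ?m2) |- prov _ _ _ (lset _) (lset _) =>
   apply (weak_rule m1 m2 _ _ H); [incl_tac|incl_tac|fmk_all|fmk_all] end.

Ltac rm p l := match l with | p :: ?t => t | ?h :: ?t => let r := rm p t in constr:(h :: r) end.
Ltac focusL p := match goal with |- prov _ _ _ (lset ?l1) ?D => let r := rm p l1 in 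
  replace (lset l1) with (lset (p :: r)) by (apply lset_perm; intro; simpl; tauto) end.
Ltac focusR p := match goal with |- prov _ _ _ ?C (lset ?l2) => let r := rm p l2 in 
  replace (lset l2) with (lset (p :: r)) by (apply lset_perm; intro; simpl; tauto) end.

Ltac decomp := match goal with |- prov _ _ _ (lset ?l1) (lset ?l2) =>
 first [
   match l2 with context [TopF _] => apply Top_rule; [fmk_all|fmk_all|inl] end
 | match l1 with context [BotF _] => apply Bot_rule; [fmk_all|fmk_all|inl] end
 | match l1 with context [And2 ?a ?b] => focusL (And2 a b); apply LAnd2_rule end
 | match l1 with context [Or2 ?a ?b] => focusL (Or2 a b); apply LOr2_rule end
 | match l1 with context [Neg ?a] => focusL (Neg a); apply LNeg_rule end
 | match l2 with context [And2 ?a ?b] => focusR (And2 a b); apply RAnd2_rule end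
 | match l2 with context [Or2 ?a ?b] => focusR (Or2 a b); apply ROr2_rule end
 | match l2 with context [Neg ?a] => focusR (Neg a); apply RNeg_rule end ] end.

Ltac prop := first [leaf | hleaf | once decomp; prop].

Definition le (p q : fm G) := prov K L T (lset [p]) (lset [q]).

Lemma le_fmk (p q : fm G) : le p q -> Fmk K p /\ Fmk K q.
Proof. intro H. destruct (prov_wf _ _ H) as [F1 F2]. split; [apply F1|apply F2]; simpl; auto. Qed.

Lemma le_refl (p : fm G) : Fmk K p -> le p p.
Proof. intros; unfold le; prop. Qed.

Lemma le_trans (p q r : fm G) : le p q -> le q r -> le p r.
Proof.
  intros H1 H2. destruct (le_fmk _ _ H1), (le_fmk _ _ H2). unfold le in *.
  apply (cut_rule q); prop.
Qed.

Lemma sing_lset (p : fm G) : sing p = lset [p].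
Proof. sext. Qed.
Lemma emp_lset : @emp G = lset [].
Proof. sext. Qed.

Lemma Fmk_Iff_inv (p q : fm G) : Fmk K (Iff p q) -> Fmk K p /\ Fmk K q.
Proof.
  intro H. apply Fmk_inv in H. destruct H as [_ H].
  pose proof (Fmk_inv _ (H true)) as [_ H1]. 
  pose proof (Fmk_inv _ (H1 true)) as H2. pose proof (H1 false) as H3. simpl in *. auto.
Qed.

Lemma equivF_iff (p q : fm G) : equivF K L T p q <-> Fmk K p /\ Fmk K q /\ le p q /\ le q p.
Proof.
  unfold equivF. rewrite emp_lset, sing_lset. split.
  - intro H. destruct (prov_wf _ _ H) as [_ F]. destruct (Fmk_Iff_inv p q) as [Fp Fq].
    apply F; simpl; auto.
    split; auto. split; auto. unfold le. split.
    + apply (cut_rule (Iff p q)). prop. unfold Iff. prop.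
    + apply (cut_rule (Iff p q)). prop. unfold Iff. prop.
  - intros [Fp [Fq [H1 H2]]]. unfold le in *. unfold Iff. prop.
Qed.


Definition A := LT_ops L T HK.
Definition Rep (x : LTcar K L T) (p : fm G) := Fmk K p /\ proj1_sig x = cls K L T p.

Lemma rep_spec (x : LTcar K L T) : proj1_sig x = cls K L T (rep x).
Proof. unfold rep. destruct (constructive_indefinite_description _ (proj2_sig x)) as [p [Hp E]]. simpl. exact E. Qed.

Lemma Rep_rep x : Rep x (rep x).
Proof. split; [apply rep_ok | apply rep_spec]. Qed.

Lemma Rep_mk (r : fm G) (H : Fmk K r) : Rep (mkLT L T H) r.
Proof. split; auto. Qed.

Lemma cls_self (p : fm G) : Fmk K p -> cls K L T p p.
Proof. intro H; split; auto. apply equivF_iff; split; auto; split; auto; split; apply le_refl; auto. Qed.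

Lemma cls_eq_le (p q : fm G) : Fmk K p -> Fmk K q -> cls K L T p = cls K L T q -> le p q /\ le q p.
Proof.
  intros Fp Fq E. pose proof (cls_self q Fq) as H. rewrite <- E in H. destruct H as [_ H].
  apply equivF_iff in H. tauto.
Qed.

Lemma le_cls_eq (p q : fm G) : le p q -> le q p -> cls K L T p = cls K L T q.
Proof.
  intros H1 H2. apply fext; intro r; unfold cls; rewrite !equivF_iff.
  destruct (le_fmk _ _ H1).
  split; intros [Fr [Fx [Fr' [H3 H4]]]]; repeat split; auto; eapply le_trans; eauto.
Qed.

Lemma Rep_uniq x (p q : fm G) : Rep x p -> Rep x q -> le p q /\ le q p.
Proof. intros [F1 E1] [F2 E2]. apply cls_eq_le; auto. congruence. Qed.

Lemma Rep_eq x y (p q : fm G) : Rep x p -> Rep y q -> le p q -> le q p -> x = y.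
Proof.
  intros [F1 E1] [F2 E2] H1 H2. destruct x as [c Hc], y as [d Hd]; simpl in *.
  apply subset_eq_compat. rewrite E1, E2. apply le_cls_eq; auto.
Qed.

Lemma Rep_intro x (p q : fm G) : Rep x p -> le p q -> le q p -> Rep x q.
Proof. intros [F1 E1] H1 H2. split. apply (le_fmk _ _ H1). rewrite E1. apply le_cls_eq; auto. Qed.

Ltac reps := repeat match goal with x : LTcar K L T |- _ => 
  lazymatch goal with _ : Fmk K (rep x) |- _ => fail | _ => pose proof (rep_ok x) end end.

Lemma Rep_meet x y (p q : fm G) : Rep x p -> Rep y q -> Rep (mmeet A x y) (And2 p q).
Proof.
  intros Hx Hy. destruct (Rep_uniq _ _ _ (Rep_rep x) Hx), (Rep_uniq _ _ _ (Rep_rep y) Hy).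
  destruct Hx, Hy. reps.
  apply Rep_intro with (And2 (rep x) (rep y)). exact (Rep_mk _ _).
  all: unfold le in *; prop.
Qed.

Lemma Rep_join x y (p q : fm G) : Rep x p -> Rep y q -> Rep (mjoin A x y) (Or2 p q).
Proof.
  intros Hx Hy. destruct (Rep_uniq _ _ _ (Rep_rep x) Hx), (Rep_uniq _ _ _ (Rep_rep y) Hy).
  destruct Hx, Hy. reps.
  apply Rep_intro with (Or2 (rep x) (rep y)). exact (Rep_mk _ _).
  all: unfold le in *; prop.
Qed.

Lemma Rep_neg x (p : fm G) : Rep x p -> Rep (mneg A x) (Neg p).
Proof.
  intros Hx. destruct (Rep_uniq _ _ _ (Rep_rep x) Hx).
  destruct Hx. reps.
  apply Rep_intro with (Neg (rep x)). exact (Rep_mk _ _).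
  all: unfold le in *; prop.
Qed.

Lemma Rep_box x (p : fm G) : Rep x p -> Rep (mbox A x) (Box p).
Proof.
  intros Hx. destruct (Rep_uniq _ _ _ (Rep_rep x) Hx) as [H1 H2].
  apply Rep_intro with (Box (rep x)). exact (Rep_mk _ _).
  apply (Nec_rule [rep x] p); exact H1.
  apply (Nec_rule [p] (rep x)); exact H2.
Qed.

Lemma Rep_top : Rep (mtop A) (TopF G).
Proof. exact (Rep_mk _ _). Qed.
Lemma Rep_bot : Rep (mbot A) (BotF G).
Proof. exact (Rep_mk _ _). Qed.

Lemma mle_iff x y (p q : fm G) : Rep x p -> Rep y q -> (mle A x y <-> le p q).
Proof.
  intros Hx Hy. pose proof (Rep_meet _ _ _ _ Hx Hy) as Hm. 
  destruct Hx as [Fp Ex], Hy as [Fq Ey]. unfold mle. split.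
  - intro E. rewrite E in Hm. destruct (Rep_uniq _ _ _ (conj Fp Ex) Hm) as [H1 _].
    eapply le_trans. exact H1. unfold le; prop.
  - intro H. eapply Rep_eq. exact Hm. exact (conj Fp Ex). unfold le in *; prop. unfold le in *; prop.
Qed.

Ltac rops := repeat first [apply Rep_meet | apply Rep_join | apply Rep_neg | apply Rep_box | apply Rep_top | apply Rep_bot | apply Rep_rep].
Ltac ba := intros; reps; eapply Rep_eq; [rops | rops | unfold le; prop | unfold le; prop].

Lemma LT_BA : boolean_algebra A.
Proof.
  constructor; ba.
Qed.


Lemma LT_modal : modal_algebra A.
Proof.
  split; [exact LT_BA|split].
  - eapply Rep_eq. apply Rep_box, Rep_top. apply Rep_top.
    unfold le; prop.
    apply (weak_rule [] [Box (TopF G)]). apply (Nec_rule [] (TopF G)). prop.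
    incl_tac. incl_tac. fmk_all. fmk_all.
  - intros a b. reps. eapply Rep_eq. rops. rops.
    + unfold le. apply RAnd2_rule; [apply (Nec_rule [And2 (rep a) (rep b)] (rep a)) | apply (Nec_rule [And2 (rep a) (rep b)] (rep b))]; prop.
    + unfold le. apply LAnd2_rule. apply (Nec_rule [rep a; rep b] (And2 (rep a) (rep b))); prop.
Qed.

Lemma Fmk_tr (s : nat -> fm G) p : (forall n, Fmk K (s n)) -> Fmk K (tr s p).
Proof. intro Hs. induction p; simpl; auto; fmk1. Qed.

Lemma Rep_aeval v p : Rep (aeval A v p) (tr (fun n => rep (v n)) p).
Proof. induction p; simpl; rops; auto. Qed.

Lemma L_thm (s : nat -> fm G) p : L p -> Fmk K (tr s p) -> prov K L T (lset []) (lset [tr s p]).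
Proof.
  intros Lp F. apply (R_TL (S := sing (tr s p))).
  intros x Hx; unfold sing in Hx; subst x; right; split; eauto.
  replace (U (sing (tr s p)) (lset [])) with (lset [tr s p]) by sext. prop.
Qed.

Lemma LT_Lalg : L_algebra L A.
Proof.
  split. exact LT_modal.
  intros p Lp v. pose proof (Rep_aeval v p) as H. destruct H as [F E].
  eapply Rep_eq. exact (conj F E). exact Rep_top. unfold le; prop.
  pose proof (L_thm _ p Lp F). unfold le. prop.
Qed.

Lemma glb_big (I : IdxT) (f : I -> fm G) (HF : Fmk K (BigAnd I f)) :
  is_glb A (fun x => exists i, proj1_sig x = cls K L T (f i)) (mkLT L T HF).
Proof.
  pose proof (Fmk_inv _ HF) as [Hc Hf]. split.
  - intros x [i E]. apply (mle_iff _ _ _ _ (Rep_mk _ HF) (conj (Hf i) E)). unfold le.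
    apply (LAndI_rule I f i); auto. pose proof (Hf i); prop.
  - intros y Hy. reps. apply (mle_iff _ _ _ _ (Rep_rep y) (Rep_mk _ HF)). unfold le.
    apply RAndI_rule; [exact HF| |fmk_all|fmk_all]. intros i.
    specialize (Hy (mkLT L T (Hf i)) (ex_intro _ i eq_refl)).
    apply (mle_iff _ _ _ _ (Rep_rep y) (Rep_mk _ _)) in Hy. exact Hy.
Qed.

Lemma lub_big (I : IdxT) (f : I -> fm G) (HF : Fmk K (BigOr I f)) :
  is_lub A (fun x => exists i, proj1_sig x = cls K L T (f i)) (mkLT L T HF).
Proof.
  pose proof (Fmk_inv _ HF) as [Hc Hf]. split.
  - intros x [i E]. apply (mle_iff _ _ _ _ (conj (Hf i) E) (Rep_mk _ HF)). unfold le.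
    apply (ROrI_rule I f i); auto. pose proof (Hf i); prop.
  - intros y Hy. reps. apply (mle_iff _ _ _ _ (Rep_mk _ HF) (Rep_rep y)). unfold le.
    apply LOrI_rule; [exact HF| |fmk_all|fmk_all]. intros i.
    specialize (Hy (mkLT L T (Hf i)) (ex_intro _ i eq_refl)).
    apply (mle_iff _ _ _ _ (Rep_mk _ _) (Rep_rep y)) in Hy. exact Hy.
Qed.


Lemma glb_ext (X Y : LTcar K L T -> Prop) m : (forall x, X x <-> Y x) -> is_glb A Y m -> is_glb A X m.
Proof. intros H [H1 H2]. split; intros; [apply H1, H; auto| apply H2; intros; apply H0, H; auto]. Qed.
Lemma lub_ext (X Y : LTcar K L T -> Prop) m : (forall x, X x <-> Y x) -> is_lub A Y m -> is_lub A X m.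
Proof. intros H [H1 H2]. split; intros; [apply H1, H; auto| apply H2; intros; apply H0, H; auto]. Qed.

Lemma LT_kc : kappa_complete K A.
Proof.
  intros X [[g Hg] Hno].
  set (I := {k : K | exists x (H : X x), g (exist _ x H) = k}).
  set (xi := fun i : I => proj1_sig (constructive_indefinite_description _ (proj2_sig i))).
  assert (xspec : forall i, exists H : X (xi i), g (exist _ (xi i) H) = proj1_sig i).
  { intro i. unfold xi. destruct (constructive_indefinite_description _ (proj2_sig i)) as [x Hx]. exact Hx. }
  assert (xX : forall i, X (xi i)) by (intro i; destruct (xspec i) as [H _]; exact H).
  assert (Iinj : forall i j : I, proj1_sig i = proj1_sig j -> i = j).
  { intros [i Hi] [j Hj]; simpl; intros E; apply subset_eq_compat; auto. }
  assert (HcI : lt_card I K).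
  { split. exists (@proj1_sig _ _). exact Iinj.
    intros [h Hh]. apply Hno. exists (fun k => exist _ (xi (h k)) (xX (h k))).
    intros k1 k2 E. apply Hh, Iinj.
    destruct (xspec (h k1)) as [H1 E1], (xspec (h k2)) as [H2 E2].
    rewrite <- E1, <- E2. f_equal. injection E; intro E'.
    apply subset_eq_compat. exact E'. }
  set (f := fun i => rep (xi i)).
  assert (Hf : forall i, Fmk K (f i)) by (intro; apply rep_ok).
  assert (HX : forall x, X x <-> exists i, proj1_sig x = cls K L T (f i)).
  { intro x. split.
    - intro Hx. set (i := exist (fun k => exists x (H : X x), g (exist _ x H) = k) (g (exist _ x Hx)) (ex_intro _ x (ex_intro _ Hx eq_refl)) : I).
      exists i. destruct (xspec i) as [H1 E1]. simpl in E1. apply Hg in E1.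
      injection E1; intro E2. unfold f. rewrite <- rep_spec. rewrite E2. reflexivity.
    - intros [i E]. unfold f in E. rewrite <- rep_spec in E.
      assert (x = xi i). { destruct x, (xi i); simpl in *; subst; apply subset_eq_compat; auto. }
      subst; auto. }
  split.
  - exists (mkLT L T (FAnd f HcI Hf)). eapply glb_ext. exact HX. apply glb_big.
  - exists (mkLT L T (FOr f HcI Hf)). eapply lub_ext. exact HX. apply lub_big.
Qed.


Lemma main_sec :
  let A := LT_ops L T HK in
  (forall (x y : LTcar K L T) (p q : fm G), Fmk K p -> Fmk K q ->
     proj1_sig x = cls K L T p -> proj1_sig y = cls K L T q ->
     proj1_sig (mmeet A x y) = cls K L T (And2 p q) /\
     proj1_sig (mjoin A x y) = cls K L T (Or2 p q) /\
     proj1_sig (mneg A x) = cls K L T (Neg p) /\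
     proj1_sig (mbox A x) = cls K L T (Box p) /\
     (mle A x y <-> prov K L T (sing p) (sing q))) /\
  L_algebra L A /\ kappa_complete K A /\
  (forall (I : IdxT) (f : I -> fm G), lt_card I K -> (forall i, Fmk K (f i)) ->
     (exists m : LTcar K L T, proj1_sig m = cls K L T (BigAnd I f) /\
        is_glb A (fun x => exists i, proj1_sig x = cls K L T (f i)) m) /\
     (exists j : LTcar K L T, proj1_sig j = cls K L T (BigOr I f) /\
        is_lub A (fun x => exists i, proj1_sig x = cls K L T (f i)) j)).
Proof.
  intro A0. split; [|split; [exact LT_Lalg|split; [exact LT_kc|]]].
  - intros x y p q Fp Fq Ex Ey.
    assert (Hx : Rep x p) by (split; auto). assert (Hy : Rep y q) by (split; auto).
    split; [apply (Rep_meet _ _ _ _ Hx Hy)|].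
    split; [apply (Rep_join _ _ _ _ Hx Hy)|].
    split; [apply (Rep_neg _ _ Hx)|].
    split; [apply (Rep_box _ _ Hx)|].
    rewrite !sing_lset. exact (mle_iff _ _ _ _ Hx Hy).
  - intros I f Hc Hf. split.
    + exists (mkLT L T (FAnd f Hc Hf)). split; [reflexivity|apply glb_big].
    + exists (mkLT L T (FOr f Hc Hf)). split; [reflexivity|apply lub_big].
Qed.

End Calc.

Theorem proposition4p3 (G : Type) (K : IdxT) (L : mf -> Prop) (T : fset G)
  (HK : regular K) (HL : normal_logic L) (Hfmp : fmp L)
  (HT : forall p, T p -> Fmk K p) :
  let A := LT_ops L T HK in
  (* the operations are well defined on classes: [p] op [q] = [p op q] *)
  (forall (x y : LTcar K L T) (p q : fm G), Fmk K p -> Fmk K q ->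
     proj1_sig x = cls K L T p -> proj1_sig y = cls K L T q ->
     proj1_sig (mmeet A x y) = cls K L T (And2 p q) /\
     proj1_sig (mjoin A x y) = cls K L T (Or2 p q) /\
     proj1_sig (mneg A x) = cls K L T (Neg p) /\
     proj1_sig (mbox A x) = cls K L T (Box p) /\
     (mle A x y <-> prov K L T (sing p) (sing q))) /\
  (* LT_L(G,kappa,T) is a kappa-complete L-algebra *)
  L_algebra L A /\ kappa_complete K A /\
  (* meets and joins of sets of size < kappa are given by big connectives *)
  (forall (I : IdxT) (f : I -> fm G), lt_card I K -> (forall i, Fmk K (f i)) ->
     (exists m : LTcar K L T, proj1_sig m = cls K L T (BigAnd I f) /\
        is_glb A (fun x => exists i, proj1_sig x = cls K L T (f i)) m) /\
     (exists j : LTcar K L T, proj1_sig j = cls K L T (BigOr I f) /\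
        is_lub A (fun x => exists i, proj1_sig x = cls K L T (f i)) j)).
Proof.
  exact (main_sec G K L T HK).
Qed.
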